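(* Let $k\neq 0$, $a$, $b$ be real numbers and let $\{S^{(a,b)}_{k,n}\}_{n\ge 0}$ be the generalized $k$-FL sequence. (a) For an odd integer $n\ge 1$, the matrix $A^{(k,a,b)}_n$ is invertible if and only if $S^{(a,b)}_{k,n+1}-S^{(a,b)}_{k,n}\neq -bk+2b-a$. (b) For an even integer $n\ge 2$, the matrix $B^{(k,a,b)}_n$ is invertible if and only if $S^{(a,b)}_{k,n+1}-S^{(a,b)}_{k,n}\neq bk-2b+a$ and $S^{(a,b)}_{k,n+1}+S^{(a,b)}_{k,n}\neq bk+2b+a$.
   Context: For real numbers $k,a,b$, the generalized $k$-FL sequence $\{S^{(a,b)}_{k,n}\}_{n\ge0}$ is defined by $S^{(a,b)}_{k,0}=2b$, $S^{(a,b)}_{k,1}=bk+a$, and $S^{(a,b)}_{k,n}=k\,S^{(a,b)}_{k,n-1}+S^{(a,b)}_{k,n-2}$ for $n\ge2$. For $n\ge1$, $A^{(k,a,b)}_n$ is the $n\times n$ real skew circulant matrix with first row $(S^{(a,b)}_{k,1},\dots,S^{(a,b)}_{k,n})$, i.e. its $(i,j)$ entry is $S^{(a,b)}_{k,j-i+1}$ if $j\ge i$ and $-S^{(a,b)}_{k,n+j-i+1}$ if $j<i$. $B^{(k,a,b)}_n$ is the $n\times n$ circulant matrix whose $(i,j)$ entry is $S^{(a,b)}_{k,j-i+1}$ if $j\ge i$ and $S^{(a,b)}_{k,n+j-i+1}$ if $j<i$. *)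

(* Defs.v *)
From HB Require Import structures.
From mathcomp Require Import all_boot all_order all_algebra.
From mathcomp Require Import reals.
Set Implicit Arguments. Unset Strict Implicit. Unset Printing Implicit Defensive.
Import Order.TTheory GRing.Theory Num.Theory.
Local Open Scope ring_scope.

(* Generalized k-FL sequence: S 0 = 2b, S 1 = b k + a, S (n+2) = k S (n+1) + S n. *)
Fixpoint FLpair (R : realType) (k a b : R) (n : nat) : R * R :=
  match n with
  | 0%N => (2 * b, b * k + a)
  | m.+1 => let p := FLpair k a b m in (p.2, k * p.2 + p.1)
  end.

Definition FL (R : realType) (k a b : R) (n : nat) : R := (FLpair k a b n).1.

(* Skew circulant matrix A_n with first row (S_1,...,S_n), indices 0-based:
   entry (i,j) = S_{j-i+1} if j >= i, else - S_{n+j-i+1}. *)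
Definition skewcircFL (R : realType) (k a b : R) (n : nat) : 'M[R]_n :=
  \matrix_(i < n, j < n)
    if (i <= j)%N then FL k a b (j - i).+1 else - FL k a b (n + j - i).+1.

Definition circFL (R : realType) (k a b : R) (n : nat) : 'M[R]_n :=
  \matrix_(i < n, j < n)
    if (i <= j)%N then FL k a b (j - i).+1 else FL k a b (n + j - i).+1.

(* Main.v *)
Require Import Defs.
From HB Require Import structures.
From mathcomp Require Import all_boot all_order all_algebra.
From mathcomp Require Import reals.
From mathcomp Require Import zify ring lra.
Set Implicit Arguments. Unset Strict Implicit. Unset Printing Implicit Defensive.
Import Order.TTheory GRing.Theory Num.Theory.
Local Open Scope ring_scope.

Definition gmat (R : realType) (S : nat -> R) (e : R) (n : nat) : 'M[R]_n :=
  \matrix_(i < n, j < n) if (i <= j)%N then S (j - i).+1 else e * S (n + j - i).+1.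
Definition uext (R : realType) (N : nat) (e : R) (c : nat -> R) (t : nat) : R :=
  e ^+ (t %/ N)%N * c (t %% N)%N.
Definition hh (R : realType) (S : nat -> R) (N : nat) (u : nat -> R) (i : nat) : R :=
  \sum_(m < N) S m.+1 * u (i + m)%N.

Lemma shiftS (R : realType) (N : nat) (x u : nat -> R) (i : nat) :
  \sum_(m < N) x m.+1 * u (i.+1 + m)%N =
  \sum_(m < N) x m * u (i + m)%N - x 0%N * u i + x N * u (i + N)%N.
Proof.
have e1 : \sum_(m < N.+1) x m * u (i+m)%N = \sum_(m<N) x m * u (i+m)%N + x N * u (i+N)%N
  by rewrite big_ord_recr.
have e2 : \sum_(m < N.+1) x m * u (i+m)%N = x 0%N * u (i + 0)%N + \sum_(m<N) x m.+1 * u (i+m.+1)%N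
  by rewrite big_ord_recl.
rewrite (eq_bigr (fun m : 'I_N => x m.+1 * u (i + m.+1)%N)); last by move=> m _; rewrite addSnnS.
rewrite addn0 in e2. lra.
Qed.

Lemma key (R : realType) (S : nat -> R) (k e : R) (N : nat) (u : nat -> R)
  (HS : forall m, S m.+2 = k * S m.+1 + S m) (Hu : forall t, u (t + N)%N = e * u t) (i : nat) :
  hh S N u i.+2 + k * hh S N u i.+1 - hh S N u i =
  (e * S N.+1 - S 1%N) * u i + (e * S N - S 0%N) * u i.+1.
Proof.
have h2 := @shiftS _ N S u i.+1.
have h1 := @shiftS _ N (fun m => S m.+1) u i.
have E : \sum_(m < N) S m * u (i.+1 + m)%N =
   \sum_(m < N) S m.+2 * u (i.+1 + m)%N - k * hh S N u i.+1.
  rewrite /hh mulr_sumr -sumrB; apply: eq_bigr => m _; rewrite HS; ring.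
rewrite /= in h1.
rewrite /hh h2 E h1 -/(hh S N u i) !Hu.
rewrite -/(hh S N u i.+1). ring.
Qed.

Lemma uext_shift (R : realType) (N : nat) (e : R) c t : (0 < N)%N ->
  uext N e c (t + N)%N = e * uext N e c t.
Proof.
move=> N0; rewrite /uext modnDr.
have -> : ((t + N) %/ N = t %/ N + 1)%N by rewrite -[X in (t + X)%N](mul1n N) divnDMl.
rewrite exprD expr1; ring.
Qed.

Lemma hh_shift (R : realType) S N (e : R) u i :
  (forall t, u (t + N)%N = e * u t) -> hh S N u (i + N)%N = e * hh S N u i.
Proof.
move=> Hu; rewrite /hh mulr_sumr; apply: eq_bigr => m _.
by rewrite addnAC Hu; ring.
Qed.

Lemma link (R : realType) S (e : R) n (v : 'rV[R]_n.+1) (i : 'I_n.+1) :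
  (v *m (gmat S e n.+1)^T) 0 i = hh S n.+1 (uext n.+1 e (fun t => v 0 (inord t))) i.
Proof.
rewrite mxE /hh.
rewrite (reindex_inj (h := fun m : 'I_n.+1 => (inord ((i + m) %% n.+1)%N : 'I_n.+1))).
  apply: eq_bigr => m _.
  rewrite !mxE /uext inordK; last by rewrite ltn_pmod.
  have Hi := ltn_ord i; have Hm := ltn_ord m.
  case: (ltnP (i + m) n.+1) => H.
    rewrite modn_small // divn_small // leq_addr addKn expr0; ring.
  have E : (i + m = 1 * n.+1 + (i + m - n.+1))%N by lia.
  have L : (i + m - n.+1 < n.+1)%N by lia.
  have D : ((i + m) %/ n.+1 = 1)%N by rewrite E addnC divnDMl // divn_small.
  have M : ((i + m) %% n.+1 = i + m - n.+1)%N by rewrite {1}E modnMDl modn_small.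
  rewrite D M.
  have -> : (i <= i + m - n.+1)%N = false by lia.
  have -> : (n.+1 + (i + m - n.+1) - i)%N = m by lia.
  rewrite expr1; ring.
move=> m1 m2 /(congr1 val) /=; rewrite !inordK ?ltn_pmod // => H.
apply: val_inj => /=.
by move/eqP: H; rewrite eqn_modDl !modn_small // => /eqP.
Qed.

Lemma kernel_rel (R : realType) (S : nat -> R) (k e : R) n (v : 'rV[R]_n.+1)
  (HS : forall m, S m.+2 = k * S m.+1 + S m) :
  v *m (gmat S e n.+1)^T = 0 ->
  forall i, (e * S n.+2 - S 1%N) * uext n.+1 e (fun t => v 0 (inord t)) i
          + (e * S n.+1 - S 0%N) * uext n.+1 e (fun t => v 0 (inord t)) i.+1 = 0.
Proof.
move=> Hv.
set u := uext n.+1 e (fun t => v 0 (inord t)).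
have Hu : forall t, u (t + n.+1)%N = e * u t by move=> t; apply: uext_shift.
have h0 : forall i, hh S n.+1 u i = 0.
  elim/ltn_ind => i IH.
  case: (ltnP i n.+1) => Hi.
    have := link S e v (Ordinal Hi); rewrite Hv mxE => <- //.
  have -> : i = (i - n.+1 + n.+1)%N by rewrite subnK.
  rewrite (hh_shift S _ Hu) IH ?mulr0 //; lia.
move=> i; rewrite -(key HS Hu i) !h0; ring.
Qed.

Lemma rel_forward (R : realType) (c0 c1 e : R) N (u : nat -> R) :
  (forall t, u (t + N)%N = e * u t) ->
  (forall i, c0 * u i + c1 * u i.+1 = 0) ->
  (exists t, u t != 0) ->
  (c0 = 0 /\ c1 = 0) \/ (exists r, r ^+ N = e /\ c0 = - r * c1).
Proof.
move=> Hu Hr [t Ht].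
have [c10|c1n0] := eqVneq c1 0.
  left; split=> //; have := Hr t; rewrite c10 mul0r addr0 => /eqP.
  by rewrite mulf_eq0 (negbTE Ht) orbF => /eqP.
right; exists (- c0 / c1).
have Hs : forall i, u i.+1 = (- c0 / c1) * u i.
  move=> i; have := Hr i => H.
  apply: (mulfI c1n0); rewrite mulrA mulrCA divff // mulr1.
  by apply/eqP; rewrite -subr_eq0 -H; apply/eqP; ring.
have Hp : forall i, u i = (- c0 / c1) ^+ i * u 0%N.
  by elim=> [|i IH]; rewrite ?expr0 ?mul1r // Hs IH exprS mulrA.
split; last by field.
have u0 : u 0%N != 0.
  apply: contra Ht => /eqP u0; by rewrite Hp u0 mulr0.
apply: (mulIf u0); rewrite -Hp -(add0n N) Hu.
done.
Qed.

Lemma rel_back (R : realType) (S : nat -> R) (k e s : R) n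
  (HS : forall m, S m.+2 = k * S m.+1 + S m) (hk : k != 0) :
  s ^+ 2 = 1 -> s ^+ n.+1 = e ->
  (e * S n.+2 - S 1%N) + s * (e * S n.+1 - S 0%N) = 0 ->
  (\row_(j < n.+1) s ^+ j) *m (gmat S e n.+1)^T = 0.
Proof.
move=> s2 sN Hc.
set v := \row_(j < n.+1) s ^+ j.
set u := uext n.+1 e (fun t => v 0 (inord t)).
have Hu' : forall t, u t = s ^+ t.
  move=> t; rewrite /u /uext mxE inordK ?ltn_pmod //.
  by rewrite -sN -exprM {3}(divn_eq t n.+1) exprD mulnC.
have Hu : forall t, u (t + n.+1)%N = e * u t by move=> t; apply: uext_shift.
have H1 : forall i, hh S n.+1 u i.+1 = s * hh S n.+1 u i.
  move=> i; rewrite /hh mulr_sumr; apply: eq_bigr => m _.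
  by rewrite !Hu' addSn exprS; ring.
have h0 : forall i, hh S n.+1 u i = 0.
  move=> i; have := key HS Hu i.
  rewrite !H1 !Hu' exprS.
  have -> : (e * S n.+2 - S 1%N) * s ^+ i + (e * S n.+1 - S 0%N) * (s * s ^+ i) = 0.
    by rewrite mulrA (mulrC _ s) -mulrDl Hc mul0r.
  have -> : s * (s * hh S n.+1 u i) = hh S n.+1 u i by rewrite mulrA -expr2 s2 mul1r.
  move/eqP; rewrite addrC addKr mulf_eq0 (negbTE hk) /= mulf_eq0 => /orP [/eqP s0|/eqP //].
  by move: s2; rewrite s0 expr2 mul0r => /eqP; rewrite eq_sym oner_eq0.
apply/matrixP => i j; rewrite (ord1 i) (link S e v j) [RHS]mxE.
exact: h0.
Qed.

Lemma root_pm1 (R : realType) (r : R) n : `|r ^+ n.+1| = 1 -> r = 1 \/ r = -1.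
Proof.
rewrite normrX => /eqP; rewrite pexpr_eq1 // -sqr_norm_eq1 sqrf_eq1.
by case/orP => /eqP ->; [left|right].
Qed.

Lemma unit_of (R : realType) (S : nat -> R) (k e : R) n
  (HS : forall m, S m.+2 = k * S m.+1 + S m) :
  ~ ((e * S n.+2 - S 1%N) = 0 /\ (e * S n.+1 - S 0%N) = 0) ->
  (forall r, r ^+ n.+1 = e -> (e * S n.+2 - S 1%N) != - r * (e * S n.+1 - S 0%N)) ->
  gmat S e n.+1 \in unitmx.
Proof.
move=> H1 H2; rewrite unitmxE unitfE -det_tr.
apply/negP => /det0P [v vn0 Hv].
have Hr := kernel_rel HS Hv.
have Hu : forall t, uext n.+1 e (fun t => v 0 (inord t)) (t + n.+1)%N =
   e * uext n.+1 e (fun t => v 0 (inord t)) t by move=> t; apply: uext_shift.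
have Hex : exists t, uext n.+1 e (fun t => v 0 (inord t)) t != 0.
  have [j Hj] : exists j : 'I_n.+1, v 0 j != 0.
    apply/existsP; move: vn0; apply: contraR; rewrite negb_exists => /forallP Hj.
    apply/eqP/matrixP => i j; rewrite (ord1 i) mxE; apply/eqP.
    by have := Hj j; rewrite negbK.
  exists j; rewrite /uext divn_small // modn_small // expr0 mul1r inord_val //.
case: (rel_forward Hu Hr Hex) => [//|[r [rN Hc]]].
by move/negP: (H2 r rN); rewrite Hc.
Qed.

Lemma nonunit_of (R : realType) (S : nat -> R) (k e s : R) n
  (HS : forall m, S m.+2 = k * S m.+1 + S m) (hk : k != 0) :
  s ^+ 2 = 1 -> s ^+ n.+1 = e ->
  (e * S n.+2 - S 1%N) + s * (e * S n.+1 - S 0%N) = 0 ->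
  gmat S e n.+1 \notin unitmx.
Proof.
move=> s2 sN Hc; rewrite unitmxE unitfE negbK -det_tr.
apply/det0P; exists (\row_(j < n.+1) s ^+ j); last exact: rel_back HS hk s2 sN Hc.
apply/eqP => /matrixP /(_ 0 0); rewrite !mxE expr0 => /eqP; by rewrite oner_eq0.
Qed.

Lemma FL_rec (R : realType) (k a b : R) m :
  FL k a b m.+2 = k * FL k a b m.+1 + FL k a b m.
Proof. by []. Qed.

Theorem theorem2p5 (R : realType) (k a b : R) (hk : k != 0) :
  (forall n : nat, (1 <= n)%N -> odd n ->
     (skewcircFL k a b n \in unitmx) <->
     (FL k a b n.+1 - FL k a b n != - (b * k) + 2 * b - a)) /\
  (forall n : nat, (2 <= n)%N -> ~~ odd n ->
     (circFL k a b n \in unitmx) <->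
     (FL k a b n.+1 - FL k a b n != b * k - 2 * b + a /\
      FL k a b n.+1 + FL k a b n != b * k + 2 * b + a)).
Proof.
have HS := @FL_rec R k a b.
have F0 : FL k a b 0 = 2 * b by [].
have F1 : FL k a b 1 = b * k + a by [].
split.
  case=> [//|n] _ Hodd.
  have -> : skewcircFL k a b n.+1 = gmat (FL k a b) (-1) n.+1.
    by apply/matrixP => i j; rewrite !mxE; case: ifP => _ //; rewrite mulN1r.
  have sN : (-1 : R) ^+ n.+1 = -1 by rewrite -signr_odd Hodd.
  have s2 : (-1 : R) ^+ 2 = 1 by rewrite sqrrN expr1n.
  split.
    move=> Hu; apply/eqP => E; move: Hu; apply/negP.
    apply: (nonunit_of HS hk s2 sN); rewrite F0 F1; lra.
  move=> C; apply: (unit_of HS).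
    by rewrite F0 F1 => -[E1 E2]; move/eqP: C; apply; lra.
  move=> r rN; have : `|r ^+ n.+1| = 1 by rewrite rN normrN1.
  case/root_pm1 => Er.
    by move: rN; rewrite Er expr1n => /eqP; rewrite -subr_eq0 opprK (pnatr_eq0 R 2).
  rewrite Er; apply/eqP => E; move/eqP: C; apply; rewrite F0 F1 in E; lra.
case=> [//|n] Hn Hev.
have -> : circFL k a b n.+1 = gmat (FL k a b) 1 n.+1.
  by apply/matrixP => i j; rewrite !mxE; case: ifP => _ //; rewrite mul1r.
have sN : (-1 : R) ^+ n.+1 = 1 by rewrite -signr_odd (negbTE Hev).
have s2 : (-1 : R) ^+ 2 = 1 by rewrite sqrrN expr1n.
have p2 : (1 : R) ^+ 2 = 1 by rewrite expr1n.
have pN : (1 : R) ^+ n.+1 = 1 by rewrite expr1n.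
split.
  move=> Hu; split; apply/eqP => E; move: Hu; apply/negP.
    apply: (nonunit_of HS hk s2 sN); rewrite F0 F1; lra.
  apply: (nonunit_of HS hk p2 pN); rewrite F0 F1; lra.
move=> [C1 C2]; apply: (unit_of HS).
  by rewrite F0 F1 => -[E1 E2]; move/eqP: C1; apply; lra.
move=> r rN; have : `|r ^+ n.+1| = 1 by rewrite rN normr1.
case/root_pm1 => Er; rewrite Er; apply/eqP => E; rewrite F0 F1 in E.
  by move/eqP: C2; apply; lra.
by move/eqP: C1; apply; lra.
Qed.
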